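(* Let $d\ge2$ be an integer, $P\subset\mathbb{R}^d$ a finite set, and $S$ a rectilinear Steiner minimal tree of $P$. Let $B$ be the set of circumballs of the line segments of $S$. Then for any $\lambda>0$, $B$ is $(\lambda,O(\lambda^d))$-thick.
   Context: A rectilinear Steiner tree of $P$ is a connected geometric graph containing all points of $P$ whose edges are line segments parallel to coordinate axes (possibly using extra ''Steiner'' vertices); its length is the total length of its segments; a rectilinear Steiner minimal tree (RSMT) is one of minimum length. The circumball of a segment $xy$ is the closed ball having $xy$ as a diameter. A collection $D$ of subsets of $\mathbb{R}^d$ is $\kappa$-thick if no point lies in more than $\kappa$ elements of $D$; a subset is $\lambda$-related if the ratio between diameters of any two of its elements is at most $\lambda$; $D$ is $(\lambda,\kappa)$-thick if no point lies in more than $\kappa$ elements of any $\lambda$-related subset of $D$. The constant in $O(\lambda^d)$ may depend on $d$. *)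

(* Defs.v *)
From Stdlib Require Import Reals List.
From mathcomp Require Import ssreflect ssrfun ssrbool eqtype ssrnat fintype bigop.
Open Scope R_scope.

Definition point (d : nat) := 'I_d -> R.

Definition edist {d : nat} (x y : point d) : R :=
  sqrt (\big[Rplus/0]_(i < d) (x i - y i)^2).

Definition segment (d : nat) := (point d * point d)%type.

Definition axis_parallel {d : nat} (s : segment d) : Prop :=
  exists i : 'I_d, fst s i <> snd s i /\ forall j : 'I_d, j <> i -> fst s j = snd s j.

Definition seg_length {d : nat} (s : segment d) : R := edist (fst s) (snd s).

Definition total_length {d : nat} (E : list (segment d)) : R :=
  fold_right (fun s acc => seg_length s + acc) 0 E.

Inductive reach {d : nat} (E : list (segment d)) : point d -> point d -> Prop :=
  | reach_refl x : reach E x x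
  | reach_fwd x y z : In (x, y) E -> reach E y z -> reach E x z
  | reach_bwd x y z : In (y, x) E -> reach E y z -> reach E x z.

(* A rectilinear Steiner tree of P: a connected geometric graph with vertex
   list V (containing P; the extra vertices are Steiner points) and edge list E,
   all of whose edges are axis-parallel segments between vertices. *)
Definition rect_steiner_tree {d : nat} (P : list (point d))
    (V : list (point d)) (E : list (segment d)) : Prop :=
  (forall p, In p P -> In p V) /\
  (forall s, In s E -> In (fst s) V /\ In (snd s) V /\ axis_parallel s) /\
  (forall u v, In u V -> In v V -> reach E u v).

Definition RSMT {d : nat} (P : list (point d))
    (V : list (point d)) (E : list (segment d)) : Prop :=
  rect_steiner_tree P V E /\
  forall V' E', rect_steiner_tree P V' E' -> total_length E <= total_length E'.

(* A closed ball, represented by (center, radius). *)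
Definition ball (d : nat) := (point d * R)%type.

Definition in_ball {d : nat} (x : point d) (b : ball d) : Prop :=
  edist x (fst b) <= snd b.

Definition diam {d : nat} (b : ball d) : R := 2 * snd b.

Definition circumball {d : nat} (s : segment d) : ball d :=
  ((fun i => (fst s i + snd s i) / 2), seg_length s / 2).

Definition related {d : nat} (lam : R) (D : list (ball d)) : Prop :=
  forall a b, In a D -> In b D -> diam a <= lam * diam b.

(* (lambda,kappa)-thick: no point lies in more than kappa elements of any
   lambda-related subset of D.  Subsets are duplicate-free sublists. *)
Definition thick_lk {d : nat} (lam kappa : R) (D : list (ball d)) : Prop :=
  forall (D' : list (ball d)) (x : point d),
    NoDup D' -> incl D' D -> related lam D' ->
    (forall b, In b D' -> in_ball x b) ->
    INR (length D') <= kappa.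

(* Main.v *)
Require Import Defs.
From Stdlib Require Import Reals List.
From mathcomp Require Import ssreflect ssrfun ssrbool eqtype ssrnat fintype bigop.
From HB Require Import structures.
From Stdlib Require Import Lra Lia ZArith ClassicalEpsilon Classical FunctionalExtensionality.
Open Scope R_scope.

Section Reach.
Context {d : nat}.
Implicit Types E : list (segment d).

Lemma reach_trans {E x y z} : reach E x y -> reach E y z -> reach E x z.
Proof.
elim=> [u|u v w h _ IH|u v w h _ IH] hz //.
- exact: (reach_fwd _ _ _ _ h (IH hz)).
- exact: (reach_bwd _ _ _ _ h (IH hz)).
Qed.

Lemma reach_edge {E x y} : In (x, y) E -> reach E x y.
Proof. move=> h; apply: (reach_fwd _ _ _ _ h); constructor. Qed.

Lemma reach_edge_b {E x y} : In (x, y) E -> reach E y x.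
Proof. move=> h; apply: (reach_bwd _ _ _ _ h); constructor. Qed.

Lemma reach_sym {E x y} : reach E x y -> reach E y x.
Proof.
elim=> [u|u v w h _ IH|u v w h _ IH]; first constructor.
- exact: (reach_trans IH (reach_edge_b h)).
- exact: (reach_trans IH (reach_edge h)).
Qed.

Lemma reach_mono {E E' x y} : incl E E' -> reach E x y -> reach E' x y.
Proof.
move=> hi; elim=> [u|u v w h _ IH|u v w h _ IH]; first constructor.
- exact: (reach_fwd _ _ _ _ (hi _ h) IH).
- exact: (reach_bwd _ _ _ _ (hi _ h) IH).
Qed.

Lemma reach_replace E1 E2 s E' x y :
  incl (E1 ++ E2) E' -> reach E' (fst s) (snd s) ->
  reach (E1 ++ s :: E2) x y -> reach E' x y.
Proof.
move=> hi hs; elim=> [u|u v w h _ IH|u v w h _ IH]; first constructor.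
- apply: reach_trans IH.
  case: (in_app_or _ _ _ h) => [h1|[h1|h1]].
  + apply: reach_edge; apply: hi; apply: in_or_app; by left.
  + by move: hs; rewrite h1.
  + apply: reach_edge; apply: hi; apply: in_or_app; by right.
- apply: reach_trans IH.
  case: (in_app_or _ _ _ h) => [h1|[h1|h1]].
  + apply: reach_edge_b; apply: hi; apply: in_or_app; by left.
  + apply: reach_sym; by move: hs; rewrite h1.
  + apply: reach_edge_b; apply: hi; apply: in_or_app; by right.
Qed.

Lemma total_app E1 E2 : total_length (E1 ++ E2) = total_length E1 + total_length E2.
Proof. elim: E1 => [|s E IH] /=; [lra| rewrite IH; lra]. Qed.

End Reach.

Lemma Rplus_assoc' : associative Rplus. Proof. move=>*; by rewrite Rplus_assoc. Qed.
HB.instance Definition _ := Monoid.isComLaw.Build R 0 Rplus Rplus_assoc' Rplus_comm Rplus_0_l.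
Lemma sum_one n (F : 'I_n -> R) i : (forall j, j <> i -> F j = 0) -> \big[Rplus/0]_(k < n) F k = F i.
Proof.
move=> H. rewrite (bigD1 i) //= big1 ?Rplus_0_r // => j /eqP hj; exact: H.
Qed.
Lemma term_le n (F : 'I_n -> R) i : (forall j, 0 <= F j) -> F i <= \big[Rplus/0]_(k < n) F k.
Proof.
move=> H. rewrite (bigD1 i) //=. 
have: 0 <= \big[Rplus/0]_(k < n | k != i) F k.
  apply: (big_ind (fun x => 0 <= x)); [lra| move=> x y; lra | move=> j _; exact: H].
move=> h; rewrite -{1}(Rplus_0_r (F i)); apply: Rplus_le_compat_l; exact h.
Qed.

Lemma sqrt_sq_abs x : sqrt (x ^ 2) = Rabs x.
Proof. rewrite -pow2_abs; apply: sqrt_pow2; exact: Rabs_pos. Qed.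

Lemma edist_axis {d} (p q : point d) i : (forall j, j <> i -> p j = q j) ->
  edist p q = Rabs (p i - q i).
Proof.
move=> H; rewrite /edist (@sum_one _ _ i) ?sqrt_sq_abs // => j hj.
rewrite H //; ring.
Qed.

Lemma coord_le_edist {d} (p q : point d) i : Rabs (p i - q i) <= edist p q.
Proof.
rewrite -sqrt_sq_abs /edist; apply: sqrt_le_1_alt.
apply: (@term_le _ (fun k => (p k - q k) ^ 2)) => j.
rewrite -pow2_abs; apply: pow_le; exact: Rabs_pos.
Qed.

Definition sumL {A} (f : A -> R) (l : list A) := fold_right (fun j acc => f j + acc) 0 l.

Lemma sumL_le {A} (f g : A -> R) l : (forall j, f j <= g j) -> sumL f l <= sumL g l.
Proof. move=> H; elim: l => [|x l IH] /=; [lra| have := H x; lra]. Qed.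

Lemma sumL_bound {A} (f : A -> R) l K : (forall j, f j <= K) -> sumL f l <= INR (length l) * K.
Proof.
move=> H; elim: l => [|x l IH]; first (rewrite /=; lra).
change (sumL f (x::l)) with (f x + sumL f l); change (length (x::l)) with (S (length l)).
rewrite S_INR; have := H x; lra.
Qed.

Section Path.
Context {d : nat} (c : point d).

Definition tgt (a : point d) (l : list 'I_d) : point d := fun k => if seq.has (fun x => x == k) l then c k else a k.

Lemma path_ex (l : list 'I_d) : forall a, exists Pth W,
 (forall s, In s Pth -> In (fst s) (a::W) /\ In (snd s) (a::W) /\ axis_parallel s) /\
 (forall w, In w (a::W) -> reach Pth a w) /\
 In (tgt a l) (a::W) /\
 total_length Pth <= sumL (fun j => Rabs (a j - c j)) l.
Proof.
elim: l => [|j l IH] a.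
  exists nil, nil; split; [by []|split; [|split]].
  - move=> w [<-|[]]; constructor.
  - left; apply: functional_extensionality => k; by rewrite /tgt.
  - rewrite /=; lra.
set a' : point d := fun k => if k == j then c j else a k.
have Ht : tgt a (j :: l) = tgt a' l.
  apply: functional_extensionality => k; rewrite /tgt /a' /=.
  case: (k =P j) => [->|/eqP hk] /=; first by rewrite eqxx; case: (seq.has _ l).
  by rewrite eq_sym (negbTE hk).
have Hs : sumL (fun j0 => Rabs (a' j0 - c j0)) l <= sumL (fun j0 => Rabs (a j0 - c j0)) l.
  apply: sumL_le => k; rewrite /a'; case: (k =P j) => [->|_].
  - rewrite Rminus_eq_0 Rabs_R0; exact: Rabs_pos.
  - lra.
have Hsc : sumL (fun j0 => Rabs (a j0 - c j0)) (j :: l) =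
   Rabs (a j - c j) + sumL (fun j0 => Rabs (a j0 - c j0)) l by [].
have [Pth [W [H1 [H2 [H3 H4]]]]] := IH a'.
case: (Req_EM_T (a j) (c j)) => hj.
  have ea : a' = a.
    apply: functional_extensionality => k; rewrite /a'; case: (k =P j) => [->|_] //.
  rewrite ea in H1 H2 H3 H4 Ht.
  exists Pth, W; split => //; split => //; split; first by rewrite Ht.
  rewrite Hsc; have := Rabs_pos (a j - c j); rewrite ea in Hs; lra.
exists ((a, a') :: Pth), (a' :: W); split; [|split; [|split]].
- move=> s [<-|hs] /=.
  + split; [by left|split; [by right; left|]].
    exists j; split; first by rewrite /a' /= eqxx.
    move=> k hk; rewrite /a' /=; case: (k =P j) => // .
  + have [h1 [h2 h3]] := H1 s hs; split; [|split] => //.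
    * case: h1 => h1; [by right;left| by right;right].
    * case: h2 => h2; [by right;left| by right;right].
- move=> w [<-|[<-|hw]]; first constructor.
  + apply: reach_edge; by left.
  + apply: (reach_trans (y := a')); first (apply: reach_edge; by left).
    apply: (reach_mono (E := Pth)); first by move=> x hx; right.
    apply: H2; by right.
- rewrite Ht; right; exact: H3.
- rewrite Hsc; change (total_length ((a,a')::Pth)) with (seg_length (a,a') + total_length Pth).
  have -> : seg_length (a, a') = Rabs (a j - c j).
    rewrite /seg_length /= (@edist_axis _ _ _ j) /a' ?eqxx //.
    move=> k hk; case: (k =P j) => //.
  lra.
Qed.

Lemma in_enum_tgt a : tgt a (enum 'I_d) = c.
Proof. apply: functional_extensionality => k; rewrite /tgt; have : seq.has (fun x => x == k) (enum 'I_d).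
  by apply/seq.hasP; exists k; rewrite ?mem_enum.
by move=> ->. Qed.

Lemma length_enum : length (enum 'I_d) = d.
Proof.
have h : forall (T : Type) (l : list T), length l = seq.size l by move=> T; elim => //= x l ->.
by rewrite h size_enum_ord.
Qed.

End Path.

Lemma improve {d} (P V : list (point d)) E E1 E2 s1 p1 p2 :
  rect_steiner_tree P V E -> E = E1 ++ s1 :: E2 ->
  (In (p1, p2) (E1 ++ E2) \/ In (p2, p1) (E1 ++ E2)) ->
  sumL (fun j => Rabs (fst s1 j - p1 j)) (enum 'I_d) +
  sumL (fun j => Rabs (snd s1 j - p2 j)) (enum 'I_d) < seg_length s1 ->
  exists V' E', rect_steiner_tree P V' E' /\ total_length E' < total_length E.
Proof.
move=> [HP [HE HR]] eE Hs2 Hlen.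
set a := fst s1; set b := snd s1.
have [Pth1 [W1 [H11 [H12 [H13 H14]]]]] := path_ex p1 (enum 'I_d) a.
have [Pth2 [W2 [H21 [H22 [H23 H24]]]]] := path_ex p2 (enum 'I_d) b.
rewrite in_enum_tgt in H13; rewrite in_enum_tgt in H23.
have s1E : In s1 E by rewrite eE; apply: in_or_app; right; left.
have [aV [bV _]] := HE s1 s1E.
have subE : incl (E1 ++ E2) E.
  move=> x; rewrite eE => /(in_app_or _ _ _) [h|h]; apply: in_or_app; [by left| by right; right].
set E' := E1 ++ E2 ++ Pth1 ++ Pth2.
have iE12 : incl (E1 ++ E2) E'.
  move=> x /(in_app_or _ _ _) [h|h]; rewrite /E'; apply: in_or_app; [by left|right; apply: in_or_app; by left].
have iP1 : incl Pth1 E'.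
  move=> x h; rewrite /E'; apply: in_or_app; right; apply: in_or_app; right; apply: in_or_app; by left.
have iP2 : incl Pth2 E'.
  move=> x h; rewrite /E'; apply: in_or_app; right; apply: in_or_app; right; apply: in_or_app; by right.
have Hab : reach E' a b.
  apply: (reach_trans (y := p1)); first by apply: (reach_mono iP1); apply: H12.
  apply: (reach_trans (y := p2)).
    case: Hs2 => h; [apply: reach_edge| apply: reach_edge_b]; exact: iE12.
  apply: reach_sym; apply: (reach_mono iP2); exact: H22.
have HV : forall u, In u V -> reach E' a u.
  move=> u hu; apply: (@reach_replace _ E1 E2 s1 E' a u) => //.
  rewrite -eE; exact: HR.
exists (V ++ W1 ++ W2), E'; split; [split; [|split]|].
- move=> p hp; apply: in_or_app; left; exact: HP.
- move=> s /(in_app_or _ _ _) [h|/(in_app_or _ _ _) [h|/(in_app_or _ _ _) [h|h]]].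
  + have [h1 [h2 h3]] := HE s (subE s (in_or_app _ _ _ (or_introl h))).
    split; [|split] => //; apply: in_or_app; by left.
  + have [h1 [h2 h3]] := HE s (subE s (in_or_app _ _ _ (or_intror h))).
    split; [|split] => //; apply: in_or_app; by left.
  + have [h1 [h2 h3]] := H11 s h; split; [|split] => //.
    * case: h1 => [<-|h1]; apply: in_or_app; [by left| right; apply: in_or_app; by left].
    * case: h2 => [<-|h2]; apply: in_or_app; [by left| right; apply: in_or_app; by left].
  + have [h1 [h2 h3]] := H21 s h; split; [|split] => //.
    * case: h1 => [<-|h1]; apply: in_or_app; [by left| right; apply: in_or_app; by right].
    * case: h2 => [<-|h2]; apply: in_or_app; [by left| right; apply: in_or_app; by right].
- have Hall : forall u, In u (V ++ W1 ++ W2) -> reach E' a u.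
    move=> u /(in_app_or _ _ _) [h|/(in_app_or _ _ _) [h|h]].
    + exact: HV.
    + apply: (reach_mono iP1); apply: H12; by right.
    + apply: (reach_trans Hab); apply: (reach_mono iP2); apply: H22; by right.
  move=> u v hu hv; apply: (reach_trans (y := a)); [apply: reach_sym|]; exact: Hall.
- rewrite /E' eE !total_app /=.
  rewrite /a /b in H14 H24; lra.
Qed.

Definition fl (x : R) : Z := (up x - 1)%Z.

Lemma fl_spec x : IZR (fl x) <= x < IZR (fl x) + 1.
Proof. rewrite /fl minus_IZR; have [h1 h2] := archimed x; lra. Qed.

Lemma fl_eq {x y} : fl x = fl y -> Rabs (x - y) < 1.
Proof. move=> h; have := fl_spec x; have := fl_spec y; rewrite h; split_Rabs; lra. Qed.

Lemma fl_mono x y : x <= y -> (fl x <= fl y)%Z.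
Proof.
move=> h; have [h1 h2] := fl_spec x; have [h3 h4] := fl_spec y.
have : IZR (fl x) < IZR (fl y) + 1 by lra.
rewrite -plus_IZR => /lt_IZR; lia.
Qed.

Lemma fl_ge x (n : Z) : IZR n <= x -> (n <= fl x)%Z.
Proof.
move=> h; have [h1 h2] := fl_spec x.
have : IZR n < IZR (fl x) + 1 by lra.
rewrite -plus_IZR => /lt_IZR; lia.
Qed.

Lemma fl_le x (n : Z) : x <= IZR n -> (fl x <= n)%Z.
Proof.
move=> h; have [h1 h2] := fl_spec x.
have : IZR (fl x) <= IZR n by lra.
move/le_IZR; lia.
Qed.

Lemma mid_close {r1 r2 w1 w2 M : R} : 1 <= M -> 0 < r1 -> 0 < r2 ->
  Rabs w1 <= M -> Rabs (w1 - w2) < 1 -> Rabs (r1 - r2) <= r1 / M ->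
  Rabs ((r1 * w1 - r2 * w2) / M) <= 3 * r1 / M.
Proof.
move=> hM h1 h2 hw hww hr.
have e : r1 * w1 - r2 * w2 = (r1 - r2) * w1 + r2 * (w1 - w2) by ring.
have hrM : r1 / M * M = r1 by field; lra.
have b1 : Rabs ((r1 - r2) * w1) <= r1.
  rewrite Rabs_mult -[X in _ <= X]hrM; apply: Rmult_le_compat; [exact: Rabs_pos|exact: Rabs_pos|exact: hr|exact: hw].
have b2 : Rabs (r2 * (w1 - w2)) <= r2.
  rewrite Rabs_mult (Rabs_right r2); last lra.
  rewrite -{2}(Rmult_1_r r2); apply: Rmult_le_compat_l; lra.
have hr2 : r2 <= 2 * r1.
  have : r1 / M <= r1.
    rewrite /Rdiv -{2}(Rmult_1_r r1); apply: Rmult_le_compat_l; first lra.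
    rewrite -Rinv_1; apply: Rinv_le_contravar; lra.
  split_Rabs; lra.
rewrite /Rdiv Rabs_mult (Rabs_right (/M)); last (apply: Rle_ge; apply: Rlt_le; apply: Rinv_0_lt_compat; lra).
apply: Rmult_le_compat_r; first (apply: Rlt_le; apply: Rinv_0_lt_compat; lra).
rewrite e; have := Rabs_triang ((r1 - r2) * w1) (r2 * (w1 - w2)); lra.
Qed.

Lemma endpt_i {ai bi ci ei T U} : Rabs ((ai+bi)/2 - (ci+ei)/2) <= T -> Rabs (Rabs(ai-bi)/2 - Rabs(ci-ei)/2) <= U -> (ai<bi <-> ci<ei) -> Rabs (ai - ci) <= T+U /\ Rabs (bi - ei) <= T+U.
Proof.
intros h1 h2 [h3 h4].
destruct (Rlt_le_dec ai bi) as [l1|l1].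
- specialize (h3 l1). rewrite (Rabs_left (ai - bi)) in h2; last lra. rewrite (Rabs_left (ci - ei)) in h2; last lra.
  split; split_Rabs; lra.
- destruct (Rlt_le_dec ci ei) as [l2|l2]. { specialize (h4 l2); lra. }
  rewrite (Rabs_right (ai - bi)) in h2; last lra. rewrite (Rabs_right (ci - ei)) in h2; last lra.
  split; split_Rabs; lra.
Qed.

Section Close.
Context {d : nat} (x : point d) (r0 lam : R).

Definition Mn := (8 * (d + 1))%nat.
Definition Mr := INR Mn.
Definition rad (s : segment d) := seg_length s / 2.
Definition mid (s : segment d) : point d := fst (circumball s).
Definition lev (s : segment d) := Z.to_nat (fl (rad s * (Mr * lam) / r0)).
Definition crd (s : segment d) (j : 'I_d) :=
  Z.to_nat (fl (Mr * (mid s j - x j) / rad s) + Z.of_nat Mn).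

Definition ax_i (i : 'I_d) (s : segment d) :=
  fst s i <> snd s i /\ forall j, j <> i -> fst s j = snd s j.

Lemma Mr_eq : Mr = 8 * (INR d + 1).
Proof. rewrite /Mr /Mn; change (8 * (d + 1))%nat with (Nat.mul 8 (Nat.add d 1)); rewrite mult_INR plus_INR /=; ring. Qed.

Lemma Mr_ge1 : 1 <= Mr.
Proof. rewrite Mr_eq; have := pos_INR d; lra. Qed.

Lemma rad_eq {i s} : ax_i i s -> rad s = Rabs (fst s i - snd s i) / 2.
Proof. move=> [h1 h2]; by rewrite /rad /seg_length (@edist_axis _ _ _ i). Qed.

Lemma rad_pos {i s} : ax_i i s -> 0 < rad s.
Proof.
move=> h; rewrite (rad_eq h); have [h1 _] := h.
have : 0 < Rabs (fst s i - snd s i) by apply: Rabs_pos_lt; lra.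
lra.
Qed.

Lemma mid_x s j : in_ball x (circumball s) -> Rabs (mid s j - x j) <= rad s.
Proof.
move=> h; rewrite Rabs_minus_sym; have := coord_le_edist x (mid s) j.
rewrite /in_ball /= in h; rewrite /mid; move: h; rewrite /rad /=; lra.
Qed.

Lemma close i s1 s2 : 0 < r0 -> 0 < lam -> ax_i i s1 -> ax_i i s2 ->
  in_ball x (circumball s1) -> in_ball x (circumball s2) ->
  r0 <= lam * rad s1 -> r0 <= lam * rad s2 ->
  lev s1 = lev s2 -> (forall j, crd s1 j = crd s2 j) ->
  exists p1 p2, (s2 = (p1, p2) \/ s2 = (p2, p1)) /\
    sumL (fun j => Rabs (fst s1 j - p1 j)) (enum 'I_d) +
    sumL (fun j => Rabs (snd s1 j - p2 j)) (enum 'I_d) < seg_length s1.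
Proof.
move=> hr0 hl ha1 ha2 hb1 hb2 hr1 hr2 hlev hcrd.
have p1 := rad_pos ha1; have p2 := rad_pos ha2.
have hM := Mr_ge1.
set r1 := rad s1 in p1 hr1 hlev hcrd *; set r2 := rad s2 in p2 hr2 hlev hcrd *.
have Hr : Rabs (r1 - r2) <= r1 / Mr.
  set q := Mr * lam / r0.
  have hq : 0 < q by rewrite /q; apply: Rdiv_lt_0_compat => //; nra.
  have e1 : forall r, r * (Mr * lam) / r0 = r * q by move=> r; rewrite /q; field; lra.
  have g1 : forall r, 0 < r -> (0 <= fl (r * (Mr * lam) / r0))%Z.
    move=> r hr; apply: fl_ge; rewrite e1; have := Rmult_lt_0_compat _ _ hr hq; lra.
  have hz : fl (r1 * (Mr * lam) / r0) = fl (r2 * (Mr * lam) / r0).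
    apply: Z2Nat.inj; [exact: g1|exact: g1|exact: hlev].
  have := fl_eq hz; rewrite !e1 -Rmult_minus_distr_r Rabs_mult (Rabs_right q); last lra.
  move=> h.
  have e2 : r1 / Mr * q = r1 * lam / r0 by rewrite /q; field; lra.
  have h3 : 1 <= r1 * lam / r0.
    apply: (Rmult_le_reg_r r0) => //; rewrite /Rdiv Rmult_assoc Rinv_l; lra.
  apply: Rlt_le; apply: (Rmult_lt_reg_r q) => //; lra.
have Hm : forall j, Rabs (mid s1 j - mid s2 j) <= 3 * r1 / Mr.
  move=> j.
  set w1 := Mr * (mid s1 j - x j) / r1; set w2 := Mr * (mid s2 j - x j) / r2.
  have hw : forall w r m, 0 < r -> w = Mr * (m - x j) / r -> Rabs (m - x j) <= r -> Rabs w <= Mr.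
    move=> w r m hr -> hmr; rewrite /Rdiv Rabs_mult Rabs_mult (Rabs_right Mr); last lra.
    rewrite (Rabs_right (/r)); last (apply: Rle_ge; apply: Rlt_le; apply: Rinv_0_lt_compat; lra).
    have : Rabs (m - x j) * / r <= 1.
      apply: (Rmult_le_reg_r r) => //; rewrite Rmult_assoc Rinv_l; lra.
    have := Rabs_pos (m - x j); nra.
  have hw1 : Rabs w1 <= Mr by apply: (hw _ _ _ p1 erefl); exact: mid_x.
  have hw2 : Rabs w2 <= Mr by apply: (hw _ _ _ p2 erefl); exact: mid_x.
  have hMZ : IZR (- Z.of_nat Mn) = - Mr by rewrite opp_IZR -INR_IZR_INZ.
  have g : forall w, Rabs w <= Mr -> (0 <= fl w + Z.of_nat Mn)%Z.
    move=> w hw'; have : (- Z.of_nat Mn <= fl w)%Z.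
      apply: fl_ge; rewrite hMZ; move: hw'; split_Rabs; lra.
    lia.
  have hz : fl w1 = fl w2.
    have := hcrd j; rewrite /crd -/r1 -/r2 -/w1 -/w2 => h.
    have := Z2Nat.inj _ _ (g _ hw1) (g _ hw2) h; lia.
  have := mid_close hM p1 p2 hw1 (fl_eq hz) Hr.
  have -> : (r1 * w1 - r2 * w2) / Mr = mid s1 j - mid s2 j.
    rewrite /w1 /w2; field; lra.
  done.
have [hne1 hax1] := ha1; have [hne2 hax2] := ha2.
have Hri : Rabs (Rabs (fst s1 i - snd s1 i) / 2 - Rabs (fst s2 i - snd s2 i) / 2) <= r1 / Mr.
  by rewrite -(rad_eq ha1) -(rad_eq ha2).
have Hmi := Hm i; rewrite /mid /= in Hmi.
have Hoff : forall (a b c e : point d), (forall j, j <> i -> a j = b j) -> (forall j, j <> i -> c j = e j) ->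
   (forall j, Rabs ((a j + b j)/2 - (c j + e j)/2) <= 3 * r1 / Mr) ->
   forall j, j <> i -> Rabs (a j - c j) <= 4 * r1 / Mr /\ Rabs (b j - e j) <= 4 * r1 / Mr.
  move=> a b c e h1 h2 h3 j hj; have := h3 j; rewrite -(h1 j hj) -(h2 j hj).
  have : 0 <= r1 / Mr by apply: Rlt_le; apply: Rdiv_lt_0_compat; lra.
  split; split_Rabs; lra.
have Hsum : forall (p q : point d),
   (forall j, Rabs (fst s1 j - p j) <= 4 * r1 / Mr /\ Rabs (snd s1 j - q j) <= 4 * r1 / Mr) ->
   sumL (fun j => Rabs (fst s1 j - p j)) (enum 'I_d) +
   sumL (fun j => Rabs (snd s1 j - q j)) (enum 'I_d) < seg_length s1.
  move=> p q h.
  have := sumL_bound (fun j => Rabs (fst s1 j - p j)) (enum 'I_d) (4 * r1 / Mr) (fun j => proj1 (h j)).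
  have := sumL_bound (fun j => Rabs (snd s1 j - q j)) (enum 'I_d) (4 * r1 / Mr) (fun j => proj2 (h j)).
  rewrite length_enum.
  have e : INR d * (4 * r1 / Mr) = r1 * (INR d / (2 * (INR d + 1))) by rewrite Mr_eq; field; have := pos_INR d; lra.
  have hd : INR d / (2 * (INR d + 1)) < 1.
    have := pos_INR d => hd.
    apply: (Rmult_lt_reg_r (2 * (INR d + 1))); first lra.
    rewrite /Rdiv Rmult_assoc Rinv_l; lra.
  have : seg_length s1 = 2 * r1 by rewrite /r1 /rad; field.
  nra.
have Hm' : forall j, Rabs ((fst s1 j + snd s1 j) / 2 - (fst s2 j + snd s2 j) / 2) <= 3 * r1 / Mr.
  move=> j; exact: (Hm j).
case: (classic (fst s1 i < snd s1 i <-> fst s2 i < snd s2 i)) => hsg.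
- exists (fst s2), (snd s2); split; first by left; exact: surjective_pairing.
  apply: Hsum => j; case: (j =P i) => [->|hj]; last exact: Hoff.
  have [u v] := endpt_i Hmi Hri hsg.
  have : r1 / Mr + 3 * r1 / Mr = 4 * r1 / Mr by field; lra.
  lra.
- exists (snd s2), (fst s2); split; first by right; exact: surjective_pairing.
  apply: Hsum => j; case: (j =P i) => [->|hj].
  + have hsg' : (fst s1 i < snd s1 i <-> snd s2 i < fst s2 i).
      move: hne1 hne2 hsg; clear; move=> h1 h2 h3; split => h.
      * case: (Rlt_le_dec (snd s2 i) (fst s2 i)) => // h'; exfalso; apply: h3; split => _ //; lra.
      * case: (Rlt_le_dec (fst s1 i) (snd s1 i)) => // h'; exfalso; apply: h3; split => h'' ; lra.
    rewrite (Rplus_comm (fst s2 i)) in Hmi.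
    rewrite (Rabs_minus_sym (fst s2 i)) in Hri.
    have [u v] := endpt_i Hmi Hri hsg'.
    have : r1 / Mr + 3 * r1 / Mr = 4 * r1 / Mr by field; lra.
    lra.
  + apply: (Hoff _ _ _ _ hax1 (fun j h => esym (hax2 j h))) => // k.
    rewrite (Rplus_comm (snd s2 k)); exact: Hm'.
Qed.
End Close.

Fixpoint allseqs (bs : list nat) : list (list nat) :=
  match bs with
  | nil => nil :: nil
  | b :: bs' => flat_map (fun k => map (cons k) (allseqs bs')) (List.seq 0 b)
  end.

Lemma allseqs_in l bs : Forall2 (fun a b => ltn a b) l bs -> In l (allseqs bs).
Proof.
elim=> [|a b l' bs' hab _ IH] /=; first by left.
apply/in_flat_map; exists a; split.
- apply/in_seq; move/ltP: hab; lia.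
- apply/in_map_iff; exists l'; split => //.
Qed.

Lemma flat_len {A} (L : list (list A)) (l : list A) :
  length (flat_map (fun k => map (cons k) L) l) = (length l * length L)%coq_nat.
Proof. elim: l => [|a l IH] //=; rewrite length_app length_map IH; lia. Qed.

Lemma allseqs_len bs : length (allseqs bs) = fold_right Nat.mul 1%nat bs.
Proof. elim: bs => [|b bs IH] //=; rewrite flat_len length_seq IH //. Qed.

Lemma nodup_transfer {T U W} (f : T -> U) (g : T -> W) l :
  NoDup (map g l) -> (forall x y, In x l -> In y l -> f x = f y -> g x = g y) -> NoDup (map f l).
Proof.
elim: l => [|a l IH] /= hn h; first constructor.
inversion hn as [|? ? hna hnl]; subst.
constructor.
- move/in_map_iff => [y [hy hyl]]; apply: hna; apply/in_map_iff; exists y; split => //.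
  apply: h; [by right| by left| by []].
- apply: IH => // u v hu hv; apply: h; by right.
Qed.

Lemma preimage_list {d} (E : list (segment d)) (D : list (ball d)) :
  incl D (map circumball E) -> exists S, map circumball S = D /\ incl S E.
Proof.
elim: D => [|b D IH] h; first by exists nil; split => //.
have [S [h1 h2]] : exists S, map circumball S = D /\ incl S E.
  apply: IH => z hz; apply: h; by right.
have : In b (map circumball E) by apply: h; left.
move/in_map_iff => [s [hs hsE]].
exists (s :: S); split; first by rewrite /= hs h1.
move=> z [<-|hz] //; exact: h2.
Qed.

Lemma map_eq_in {A B} (f g : A -> B) l : map f l = map g l -> forall x, In x l -> f x = g x.
Proof.
elim: l => [|a l IH] //= h x [<-|hx]; first by case: h.
apply: IH => //; by case: h.
Qed.

Lemma in_enum_In {d} (j : 'I_d) : In j (enum 'I_d).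
Proof.
have : seq.has (fun x => x == j) (enum 'I_d).
  by apply/seq.hasP; exists j; rewrite ?mem_enum.
elim: (enum 'I_d) => [|a l IH] //= /orP [/eqP ->|h]; by [left| right; apply: IH].
Qed.

Lemma forall2_rep l K n : (forall a, In a l -> ltn a K) -> length l = n ->
  Forall2 (fun a b => ltn a b) l (repeat K n).
Proof.
elim: l n => [|a l IH] [|n] //= h hl; idtac.
apply: Forall2_cons; first by apply: h; left.
apply: IH; [move=> z hz; apply: h; by right| by case: hl].
Qed.

Lemma w_bound {d} (y : point d) s i j : ax_i i s -> in_ball y (circumball s) ->
  Rabs (@Mr d * (mid s j - y j) / rad s) <= @Mr d.
Proof.
move=> ha hb; have hr := rad_pos ha; have hm := mid_x y s j hb; have hM := @Mr_ge1 d.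
rewrite /Rdiv Rabs_mult Rabs_mult (Rabs_right Mr); last lra.
rewrite (Rabs_right (/rad s)); last (apply: Rle_ge; apply: Rlt_le; apply: Rinv_0_lt_compat; lra).
have : Rabs (mid s j - y j) * / rad s <= 1.
  apply: (Rmult_le_reg_r (rad s)) => //; rewrite Rmult_assoc Rinv_l; lra.
have := Rabs_pos (mid s j - y j); nra.
Qed.

Lemma fold_rep K n : fold_right Nat.mul 1%nat (repeat K n) = Nat.pow K n.
Proof. elim: n => //= n ->; by []. Qed.

Theorem lemma6 (d : nat) (hd : (2 <= d)%nat) :
  exists C : R, 0 < C /\
    forall (P : list (point d)) (V : list (point d)) (E : list (segment d)),
      RSMT P V E ->
      forall lam : R, 0 < lam ->
        thick_lk lam (C * (Rmax 1 lam) ^ d) (map circumball E).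
Proof.
have d0 : ltn 0%nat d by apply: leq_trans hd.
have inh : inhabited 'I_d := inhabits (Ordinal d0).
set K := (2 * @Mn d + 1)%nat.
have hM := @Mr_ge1 d.
have hd2 : 2 <= INR d by apply: (le_INR 2); apply/leP.
have hK : 1 <= INR K by apply: (le_INR 1); apply/leP; rewrite /K addn1.
exists (INR d * INR K ^ d * (@Mr d + 1)); split.
  have : 0 < INR K ^ d by apply: pow_lt; lra.
  move=> h; repeat apply: Rmult_lt_0_compat; lra.
move=> P V E [hR hmin] lam hl D' y hND hinc hrel hin.
have [S [eS iS]] := preimage_list _ _ hinc.
rewrite -eS in hND hrel hin *.
have [hP [hE hC]] := hR.
pose ax_of (s : segment d) := epsilon inh (fun i => ax_i i s).
have Hax : forall s, In s S -> ax_i (ax_of s) s.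
  move=> s hs; have [_ [_ h]] := hE s (iS s hs); exact: (epsilon_spec inh (fun i => ax_i i s) h).
have Hin : forall s, In s S -> in_ball y (circumball s).
  move=> s hs; apply: hin; apply/in_map_iff; by exists s.
case: S eS iS hND hrel hin Hax Hin => [|s0 S0] eS iS hND hrel hin Hax Hin.
  rewrite /=.
  have := pow_le _ d (Rle_trans _ _ _ Rle_0_1 (Rmax_l 1 lam)).
  have : 0 < INR K ^ d by apply: pow_lt; lra.
  move=> h1 h2; repeat apply: Rmult_le_pos; lra.
set S := s0 :: S0 in eS iS hND hrel hin Hax Hin *.
have s0S : In s0 S by left.
set r0 := rad s0.
have hr0 : 0 < r0 := rad_pos (Hax s0 s0S).
have Hrel : forall s, In s S -> r0 <= lam * rad s /\ rad s <= lam * r0.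
  move=> s hs.
  have h1 := hrel _ _ (in_map _ _ _ s0S) (in_map _ _ _ hs).
  have h2 := hrel _ _ (in_map _ _ _ hs) (in_map _ _ _ s0S).
  rewrite /diam /= in h1 h2; rewrite /r0 /rad; lra.
have hl1 : 1 <= lam.
  have [h _] := Hrel s0 s0S; change (rad s0) with r0 in h.
  apply: (Rmult_le_reg_r r0) => //; lra.
rewrite Rmax_right; last lra.
pose key s := nat_of_ord (ax_of s) :: lev r0 lam s :: map (crd y s) (enum 'I_d).
have HND : NoDup (map key S).
  apply: (nodup_transfer _ circumball) => // u v hu hv hk.
  case: (classic (circumball u = circumball v)) => // hneq; exfalso.
  case: hk => hax hlev hmap.
  have eax : ax_of u = ax_of v by apply: ord_inj.
  have hcrd : forall j, crd y u j = crd y v j.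
    move=> j; apply: (map_eq_in _ _ _ hmap); exact: in_enum_In.
  have hau := Hax u hu; have hav := Hax v hv; rewrite -eax in hav.
  have [h1 _] := Hrel u hu; have [h2 _] := Hrel v hv.
  have [p1 [p2 [hp hlt]]] := close y r0 lam (ax_of u) u v hr0 hl hau hav (Hin u hu) (Hin v hv) h1 h2 hlev hcrd.
  have uE := iS u hu; have vE := iS v hv.
  have [E1 [E2 eE]] := in_split _ _ uE.
  have vE12 : In v (E1 ++ E2).
    move: vE; rewrite eE => /(in_app_or _ _ _) [h|[h|h]]; apply: in_or_app; [by left| |by right].
    by exfalso; apply: hneq; rewrite h.
  have hor : In (p1,p2) (E1++E2) \/ In (p2,p1) (E1++E2).
    by case: hp => hp; rewrite hp in vE12; [left|right].
  have [V' [E' [hR' hlt']]] := improve _ _ _ _ _ _ _ _ hR eE hor hlt.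
  have := hmin V' E' hR'; lra.
set Lv := (Z.to_nat (fl (@Mr d * lam ^ 2)) + 1)%nat.
have Hkey : forall s, In s S -> In (key s) (allseqs (d :: Lv :: repeat K d)).
  move=> s hs; apply: allseqs_in; apply: Forall2_cons; first exact: ltn_ord.
  apply: Forall2_cons.
    have [_ h] := Hrel s hs.
    have hle : rad s * (@Mr d * lam) / r0 <= @Mr d * lam ^ 2.
      apply: (Rmult_le_reg_r r0) => //.
      rewrite /Rdiv Rmult_assoc Rinv_l; last lra.
      have : 0 <= @Mr d * lam by nra.
      nra.
    have := fl_mono _ _ hle; rewrite /lev /Lv => h'; apply/ltP; rewrite addn1; lia.
  apply: forall2_rep; last by rewrite length_map length_enum.
  move=> a /in_map_iff [j [<- _]].
  have hw := w_bound y s _ j (Hax s hs) (Hin s hs).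
  have hMZ : IZR (Z.of_nat (@Mn d)) = @Mr d by rewrite -INR_IZR_INZ.
  have g1 : (- Z.of_nat (@Mn d) <= fl (@Mr d * (mid s j - y j) / rad s))%Z.
    apply: fl_ge; rewrite opp_IZR hMZ; move: hw; split_Rabs; lra.
  have g2 : (fl (@Mr d * (mid s j - y j) / rad s) <= Z.of_nat (@Mn d))%Z.
    apply: fl_le; rewrite hMZ; move: hw; split_Rabs; lra.
  rewrite /crd /K; apply/ltP.
  have e : (2 * @Mn d + 1)%nat = Nat.add (Nat.mul 2 (@Mn d)) 1 by [].
  rewrite e; lia.
have Hlen : (length S <= length (allseqs (d :: Lv :: repeat K d)))%coq_nat.
  rewrite -(length_map key); apply: NoDup_incl_length => // z /in_map_iff [s [<- hs]].
  exact: Hkey.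
rewrite allseqs_len /= fold_rep in Hlen.
rewrite length_map.
apply: Rle_trans; first (apply: le_INR; exact: Hlen).
have hfl : 0 <= IZR (fl (@Mr d * lam ^ 2)).
  apply: IZR_le; apply: fl_ge; have : 0 < lam ^ 2 by apply: pow_lt; lra. nra.
have hLv : INR Lv <= @Mr d * lam ^ 2 + 1.
  rewrite /Lv plus_INR INR_IZR_INZ Z2Nat.id; last by apply: le_IZR.
  have := fl_spec (@Mr d * lam ^ 2); rewrite /=; lra.
rewrite !mult_INR pow_INR.
have hl2 : lam ^ 2 <= lam ^ d by apply: Rle_pow => //; apply/leP.
have hKd : 0 < INR K ^ d by apply: pow_lt; lra.
have : INR Lv <= (@Mr d + 1) * lam ^ d.
  have : 1 <= lam ^ 2 by nra.
  nra.
move=> h.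
have : INR Lv * INR K ^ d <= (@Mr d + 1) * lam ^ d * INR K ^ d by nra.
nra.
Qed.
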